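(* Let $G$ be a finite simple graph with edge weight function $w$ and vertex weight function $w_1$, let $\theta$ be a real number, and let $p$ be a path of length at least $1$ in $G$. Then $\mathrm{mult}(\theta,G\setminus p)\ge \mathrm{mult}(\theta,G)-1$, where $G\setminus p$ denotes $G$ with all vertices of $p$ deleted.
   Context: An edge weight function $w$ assigns a nonzero complex number to each edge; a vertex weight function $w_1$ assigns a real number (possibly $0$) to each vertex; subgraphs carry restricted weights; deleting vertices also deletes incident edges. For $A\subseteq E(G)$, $w(A)=\prod_{e\in A}w(e)$. $\mu_w(G,x)=\sum_{M}(-1)^{|M|}|w(M)|^2x^{n-2|M|}$ over all matchings $M$ (including empty). $\eta_{(w,w_1)}(G,x)=\sum_{S\subseteq V(G)}(-1)^{|V(G)\setminus S|}\big(\prod_{y\in V(G)\setminus S}w_1(y)\big)\mu_w(G[S],x)$ with $G[S]$ the induced subgraph; $\mu_w,\eta_{(w,w_1)}$ of the empty graph equal $1$. $\mathrm{mult}(\theta,H)$ is the multiplicity of $\theta$ as a root of $\eta_{(w,w_1)}(H,x)$ ($0$ if not a root). *)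

(* Defs.v *)
From HB Require Import structures.
From mathcomp Require Import all_boot all_algebra.
From mathcomp Require Import complex.
From mathcomp Require Import reals.
Set Implicit Arguments. Unset Strict Implicit. Unset Printing Implicit Defensive.
Import GRing.Theory Num.Theory.
Local Open Scope ring_scope.

(* An edge weight function is a function w : {set V} -> R[i] (complex numbers
   over the reals R), required to be nonzero on edges; a vertex weight
   function is w1 : V -> R.  A (sub)graph is represented by the vertex set S
   it is induced on. *)

Definition simple_graph (V : finType) (e : rel V) : Prop :=
  symmetric e /\ irreflexive e.

Definition edges (V : finType) (e : rel V) (S : {set V}) : {set {set V}} :=
  [set E : {set V} | [exists u in S, exists v in S, e u v && (E == [set u; v])]].

Definition matching (V : finType) (e : rel V) (S : {set V}) (M : {set {set V}}) : bool :=
  (M \subset edges e S) &&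
  [forall E1 in M, forall E2 in M, (E1 != E2) ==> [disjoint E1 & E2]].

Section Polys.
Variables (R : realType) (V : finType) (e : rel V).
Variables (w : {set V} -> R[i]) (w1 : V -> R).

Definition mu_w (S : {set V}) : {poly R[i]} :=
  \sum_(M : {set {set V}} | matching e S M)
     (-1) ^+ #|M| * (`|\prod_(E in M) w E| ^+ 2) *: 'X^(#|S| - 2 * #|M|).

Definition eta_w (S : {set V}) : {poly R[i]} :=
  \sum_(T : {set V} | T \subset S)
     ((-1) ^+ #|S :\: T| * \prod_(y in S :\: T) Complex (w1 y) 0) *: mu_w T.

Definition mult (theta : R) (S : {set V}) : nat := mup (Complex theta 0) (eta_w S).

End Polys.

(* Main.v *)
Require Import Defs.
From mathcomp Require Import all_boot all_algebra.
From mathcomp Require Import complex.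
From mathcomp Require Import reals.
From HB Require Import structures.
From mathcomp Require Import ring zify.
Set Implicit Arguments. Unset Strict Implicit. Unset Printing Implicit Defensive.
Import GRing.Theory Num.Theory.
Import order.Order.TTheory.
Local Open Scope ring_scope.


Section Comb.
Variables (V : finType) (e : rel V).
Hypothesis e_sym : symmetric e.
Hypothesis e_irr : irreflexive e.

Lemma in_edges (T : {set V}) E : (E \in edges e T) = (E \in edges e setT) && (E \subset T).
Proof.
rewrite !inE; apply/idP/idP.
  case/existsP=> u /andP[uT /existsP[v /andP[vT /andP[euv /eqP ->]]]].
  apply/andP; split; last by rewrite subUset !sub1set uT vT.
  by apply/existsP; exists u; rewrite inE; apply/existsP; exists v; rewrite inE euv eqxx.
case/andP=> /existsP[u /andP[_ /existsP[v /andP[_ /andP[euv /eqP EE]]]]] sET.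
rewrite EE in sET *; move: sET; rewrite subUset !sub1set => /andP[uT vT].
by apply/existsP; exists u; rewrite uT; apply/existsP; exists v; rewrite vT euv eqxx.
Qed.

Lemma edgesP (T : {set V}) E : reflect (exists u v, [/\ u \in T, v \in T, e u v & E = [set u; v]])
  (E \in edges e T).
Proof.
rewrite inE; apply: (iffP idP).
  case/existsP=> u /andP[uT /existsP[v /andP[vT /andP[euv /eqP ->]]]].
  by exists u, v.
case=> u [v [uT vT euv ->]].
by apply/existsP; exists u; rewrite uT; apply/existsP; exists v; rewrite vT euv eqxx.
Qed.

Lemma matchingE (T : {set V}) M : matching e T M = matching e setT M && (cover M \subset T).
Proof.
rewrite /matching andbAC; congr (_ && _).
apply/idP/idP.
  move=> /subsetP sub; apply/andP; split.
    by apply/subsetP=> E /sub; rewrite in_edges => /andP[].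
  by apply/bigcupsP=> E /sub; rewrite in_edges => /andP[].
case/andP=> /subsetP s1 /bigcupsP s2; apply/subsetP=> E EM.
by rewrite in_edges s1 // s2.
Qed.

Lemma edge_card E : E \in edges e setT -> #|E| = 2%N.
Proof.
case/edgesP=> u [v [_ _ euv ->]]; rewrite cards2.
by case: eqVneq euv => // ->; rewrite e_irr.
Qed.

Lemma matching_triv (T : {set V}) M : matching e T M -> trivIset M.
Proof.
case/andP=> _ /forallP H; apply/trivIsetP=> A B AM BM AB.
have := H A; rewrite AM /= => /forallP/(_ B); by rewrite BM AB.
Qed.

Lemma cover_card (T : {set V}) M : matching e T M -> #|cover M| = (2 * #|M|)%N.
Proof.
move=> mM; have := matching_triv mM; rewrite /trivIset => /eqP <-.
rewrite mulnC -sum_nat_const; apply: eq_bigr => E EM.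
apply: edge_card; move: mM; rewrite matchingE => /andP[/andP[/subsetP + _] _].
exact.
Qed.

Lemma matchingD1 (S : {set V}) u M :
  matching e (S :\ u) M = matching e S M && (u \notin cover M).
Proof.
rewrite matchingE (matchingE S) -andbA; congr (_ && _).
by rewrite subsetD1.
Qed.


Lemma matchingT (T : {set V}) M :
  matching e T M = (M \subset edges e T) && trivIset M.
Proof.
rewrite /matching; congr (_ && _); apply/idP/idP.
  move=> /forallP H; apply/trivIsetP=> A B AM BM AB.
  have := H A; rewrite AM /= => /forallP/(_ B); by rewrite BM AB.
move=> /trivIsetP H; apply/forallP=> A; apply/implyP=> AM.
by apply/forallP=> B; apply/implyP=> BM; apply/implyP; apply: H.
Qed.

Lemma matching_add (S : {set V}) u y M :
  e u y -> u \in S -> y \in S ->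
  (matching e S ([set u; y] |: M) && ([set u; y] \notin M)) =
  matching e (S :\ u :\ y) M.
Proof.
move=> euy uS yS; apply/idP/idP.
  case/andP=> mM EM; have := mM; rewrite matchingT => /andP[sub tr].
  rewrite matchingE matchingT.
  have sub' : M \subset [set u; y] |: M by apply/subsetP=> F FM; rewrite setU1r.
  rewrite (subset_trans sub' (subset_trans sub _)) ?(trivIsetS sub' tr) //=; last first.
    by apply/subsetP=> F; rewrite (in_edges S F) => /andP[].
  apply/bigcupsP=> F FM.
  have FS : F \subset S.
    have := subsetP sub F (setU1r _ FM); by rewrite in_edges => /andP[].
  have : [disjoint [set u; y] & F].
    have /trivIsetP trP := tr; apply: trP; rewrite ?setU11 ?setU1r //.
    by apply: contraNneq EM => ->.
  rewrite disjoints_subset subUset !sub1set !inE => /andP[uF yF].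
  apply/subsetP=> z zF; rewrite !inE (subsetP FS z zF) !andbT.
  by apply/andP; split; apply/eqP=> zE; [move: yF|move: uF]; rewrite -zE zF.
rewrite matchingE matchingT => /andP[/andP[sub tr] cov].
have uyE : [set u; y] \in edges e S by apply/edgesP; exists u, y.
have EM : [set u; y] \notin M.
  apply/negP=> EM.
  have : u \in cover M by apply/bigcupP; exists [set u; y]; rewrite // !inE eqxx.
  by move/(subsetP cov); rewrite !inE eqxx andbF.
have dis : {in M, forall B : {set V}, [disjoint [set u; y] & B]}.
  move=> B BM; rewrite disjoints_subset subUset !sub1set !inE.
  apply/andP; split; apply/negP=> zB;
    have := subsetP cov _ (subsetP (bigcup_sup B BM) _ zB); rewrite !inE eqxx //=.
  by rewrite andbF.
have n0 : set0 \notin M.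
  apply/negP=> /(subsetP sub); move/edge_card => h.
  by have := h; rewrite cards0.
have [tr' _] := trivIsetU1 dis tr n0.
rewrite EM andbT matchingT tr' andbT subUset sub1set.
rewrite uyE /=.
apply/subsetP=> F FM; rewrite in_edges (subsetP sub F FM) /=.
apply: subset_trans (bigcup_sup F FM) (subset_trans cov _).
by apply/subsetP=> z; rewrite !inE => /andP[_ /andP[]].
Qed.


Lemma matching_partner (S : {set V}) u M : matching e S M -> u \in cover M ->
  exists2 y, (y \in S) && e u y & [set u; y] \in M.
Proof.
rewrite matchingT => /andP[/subsetP sub _] /bigcupP[E EM uE].
have /edgesP[p [q [pS qS epq EE]]] := sub E EM.
move: uE; rewrite EE !inE => /orP[]/eqP ->.
  by exists q; rewrite ?qS ?epq // -EE.
by exists p; rewrite ?pS 1?e_sym ?epq // setUC -EE.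
Qed.

Lemma partner_uniq (T : {set V}) u M y y' : matching e T M -> e u y -> e u y' ->
  [set u; y] \in M -> [set u; y'] \in M -> y = y'.
Proof.
rewrite matchingT => /andP[_ /trivIsetP tr] euy euy' yM y'M.
have [EE|NE] := eqVneq [set u; y] [set u; y'].
  have : y \in [set u; y'] by rewrite -EE !inE eqxx orbT.
  rewrite !inE => /orP[/eqP yu|/eqP //].
  by move: euy; rewrite yu e_irr.
have := tr _ _ yM y'M NE; rewrite disjoints_subset subUset sub1set !inE.
by rewrite eqxx.
Qed.

End Comb.


Section PolyP.
Variables (R : comRingType) (V : finType) (e : rel V).
Hypothesis e_sym : symmetric e.
Hypothesis e_irr : irreflexive e.
Variables (a : V -> R) (c : {set V} -> R).

Lemma setU1D1 (T : finType) (x : T) (A : {set T}) :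
  (((x |: A) :\ x) == A) = (x \notin A).
Proof.
case: (boolP (x \in A)) => h /=; last by rewrite setU1K ?eqxx.
by apply/negbTE/negP => /eqP E; move: h; rewrite -E !inE eqxx.
Qed.

Definition PP (S : {set V}) : {poly R} :=
  \sum_(M : {set {set V}} | matching e S M)
     ((-1) ^+ #|M| * \prod_(E in M) c E) *: \prod_(y in S :\: cover M) ('X - (a y)%:P).

Lemma PP_partA (S : {set V}) u : u \in S ->
  \sum_(M : {set {set V}} | matching e S M && (u \notin cover M))
     ((-1) ^+ #|M| * \prod_(E in M) c E) *: \prod_(y in S :\: cover M) ('X - (a y)%:P)
  = ('X - (a u)%:P) * PP (S :\ u).
Proof.
move=> uS; rewrite /PP mulr_sumr; apply: eq_big => M; first by rewrite matchingD1.
move=> /andP[_ uM]; rewrite -scalerAr; congr (_ *: _).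
rewrite (big_setD1 u) /=; last by rewrite !inE uS uM.
congr (_ * _); apply: eq_bigl => z; rewrite !inE.
by case: (z == u); case: (z \in cover M).
Qed.

Lemma PP_partB (S : {set V}) u : u \in S ->
  \sum_(M : {set {set V}} | matching e S M && (u \in cover M))
     ((-1) ^+ #|M| * \prod_(E in M) c E) *: \prod_(y in S :\: cover M) ('X - (a y)%:P)
  = - \sum_(y | (y \in S) && e u y) c [set u; y] *: PP (S :\ u :\ y).
Proof.
move=> uS.
set f := fun M : {set {set V}} =>
  ((-1) ^+ #|M| * \prod_(E in M) c E) *: \prod_(y in S :\: cover M) ('X - (a y)%:P).
transitivity (\sum_(M : {set {set V}} | matching e S M && (u \in cover M))
   \sum_(y | ((y \in S) && e u y) && ([set u; y] \in M)) f M).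
  apply: eq_bigr => M /andP[mM uM].
  have [y0 y0c y0M] := matching_partner e_sym mM uM.
  symmetry; apply: (big_pred1 y0) => y /=.
  apply/idP/idP; last by move/eqP ->; rewrite y0c y0M.
  case/andP=> /andP[_ euy] yM; apply/eqP.
  by apply: (partner_uniq e_irr mM euy _ yM y0M); case/andP: y0c.
rewrite (exchange_big_dep (fun y => (y \in S) && e u y)) /=; last by move=> M y _ /andP[].
rewrite -sumrN; apply: eq_bigr => y /andP[yS euy].
rewrite (eq_bigl (fun M => matching e S M && ([set u; y] \in M))); last first.
  move=> M /=; rewrite yS euy /=; case: (boolP ([set u; y] \in M)) => h;
    last by rewrite !andbF.
  rewrite !andbT; apply/andP/idP => [[]//|mM]; split=> //.
  by apply/bigcupP; exists [set u; y]; rewrite // !inE eqxx.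
rewrite (reindex_onto (fun M' => [set u; y] |: M') (fun M => M :\ [set u; y])) /=;
  last by move=> M /andP[_ ?]; rewrite setD1K.
rewrite /PP scaler_sumr -sumrN; apply: eq_big => M'.
  by rewrite setU11 andbT setU1D1 matching_add.
move=> /andP[_ hE].
have EM : [set u; y] \notin M' by rewrite -setU1D1.
rewrite /f cardsU1 EM big_setU1 //= /cover big_setU1 //= -/(cover M').
rewrite scalerA -scaleNr; congr (_ *: _).
  by rewrite add1n exprS mulN1r mulNr mulrCA.
suff -> : S :\: ([set u; y] :|: cover M') = S :\ u :\ y :\: cover M' by [].
apply/setP => z; rewrite !inE.
by case: (z == u); case: (z == y); case: (z \in cover M'); rewrite ?andbF.
Qed.

Lemma PP_rec (S : {set V}) u : u \in S ->
  PP S = ('X - (a u)%:P) * PP (S :\ u)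
         - \sum_(y | (y \in S) && e u y) c [set u; y] *: PP (S :\ u :\ y).
Proof.
move=> uS; rewrite {1}/PP (bigID (fun M => u \in cover M)) /=.
by rewrite PP_partA // PP_partB // addrC.
Qed.


Lemma deriv_prodXsubC (A : {set V}) :
  (\prod_(y in A) ('X - (a y)%:P))^`() =
  \sum_(z in A) \prod_(y in A :\ z) ('X - (a y)%:P).
Proof.
elim: {A}_.+1 {-2}A (ltnSn #|A|) => // n IH A.
case: (set_0Vmem A) => [->|[z0 z0A]] lt.
  by rewrite !big_set0 derivC.
move: lt; rewrite ltnS => le.
rewrite (big_setD1 z0) //= derivM derivXsubC mul1r IH; last first.
  by apply: leq_trans le; rewrite (cardsD1 z0 A) z0A.
rewrite [RHS](big_setD1 z0) //=; congr (_ + _); rewrite mulr_sumr.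
apply: eq_bigr => z; rewrite !inE => /andP[zz0 zA].
rewrite [RHS](big_setD1 z0) /=; last by rewrite !inE z0A eq_sym zz0.
congr (_ * _); apply: eq_bigl => t; rewrite !inE.
by case: (t == z); case: (t == z0).
Qed.

Lemma PP_deriv (S : {set V}) : (PP S)^`() = \sum_(z in S) PP (S :\ z).
Proof.
rewrite /PP (big_morph _ (@derivD _) (@deriv0 _)).
under eq_bigr => M _ do rewrite derivZ deriv_prodXsubC scaler_sumr.
rewrite (exchange_big_dep (fun z => z \in S)) /=; last first.
  by move=> M z _; rewrite !inE => /andP[].
apply: eq_bigr => z zS; apply: eq_big => M.
  by rewrite matchingD1 !inE zS andbT.
move=> _; congr (_ *: _); apply: eq_bigl => t; rewrite !inE.
by case: (t == z); case: (t \in cover M); case: (t \in S); rewrite ?andbF.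
Qed.

Lemma matching0 M : matching e set0 M = (M == set0).
Proof.
apply/idP/idP.
  rewrite matchingE subset0 => /andP[/andP[sub _] /eqP cov0].
  apply/eqP/setP=> E; rewrite inE; apply/negP=> EM.
  have := edge_card e_irr (subsetP sub E EM).
  have : E \subset cover M by apply: bigcup_sup.
  by rewrite cov0 subset0 => /eqP ->; rewrite cards0.
move/eqP ->; rewrite matchingT sub0set /=.
by rewrite /trivIset /cover !big_set0 cards0.
Qed.

Lemma PP0 : PP set0 = 1.
Proof.
rewrite /PP (big_pred1 set0); last by move=> M; rewrite matching0.
by rewrite cards0 big_set0 mulr1 expr0 scale1r set0D big_set0.
Qed.

Lemma PP_monic (S : {set V}) : PP S \is monic /\ size (PP S) = #|S|.+1.
Proof.
elim: {S}_.+1 {-2}S (ltnSn #|S|) => [//|n IH S].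
case: (set_0Vmem S) => [->|[u uS]] lt.
  by rewrite PP0 monic1 size_poly1 cards0.
move: lt; rewrite ltnS => le.
have cS : #|S| = #|S :\ u|.+1 by rewrite (cardsD1 u S) uS.
have ltu : (#|S :\ u| < n)%N by rewrite -ltnS -cS.
have [m1 s1] := IH (S :\ u) ltu.
have sz1 : size (('X - (a u)%:P) * PP (S :\ u)) = #|S|.+1.
  by rewrite size_monicM ?monicXsubC ?monic_neq0 // size_XsubC s1 cS.
have sz2 : (size (\sum_(y | (y \in S) && e u y) c [set u; y] *: PP (S :\ u :\ y))%R
            < #|S|.+1)%N.
  apply: (leq_ltn_trans (size_sum _ _ _)); apply/bigmax_leqP => y /andP[yS euy].
  apply: (leq_trans (size_scale_leq _ _)).
  have yS' : y \in S :\ u by rewrite !inE yS andbT; apply: contraTneq euy => ->; rewrite e_irr.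
  have cS' : #|S :\ u| = #|S :\ u :\ y|.+1 by rewrite (cardsD1 y (S :\ u)) yS'.
  have lty : (#|S :\ u :\ y| < n)%N by apply: ltnW; rewrite -cS'.
  have [_ ->] := IH (S :\ u :\ y) lty.
  by rewrite cS cS'.
rewrite (PP_rec uS) monicE; split.
  rewrite lead_coefDl; last by rewrite size_polyN sz1.
  by rewrite -monicE monicMl ?monicXsubC.
rewrite size_polyDl; first exact: sz1.
by rewrite size_polyN sz1.
Qed.

Lemma PP_neq0 (S : {set V}) : PP S != 0.
Proof. by have [m _] := PP_monic S; apply: monic_neq0. Qed.

End PolyP.


Section Good.
Variables (R : realFieldType) (th : R).
Local Notation XT := ('X - th%:P).

Definition good (p : {poly R}) := exists m q, p = q * XT ^+ m /\ 0 < q.[th].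
Definition good0 (p : {poly R}) := p = 0 \/ good p.

Lemma good_mup p m q : p = q * XT ^+ m -> 0 < q.[th] -> mup th p = m.
Proof.
move=> -> qp; rewrite mupMr ?mup_XsubCX ?eqxx //.
by rewrite /root; apply: lt0r_neq0.
Qed.

Lemma good_neq0 p : good p -> p != 0.
Proof.
case=> m [q [-> qp]]; rewrite mulf_neq0 ?expf_neq0 ?polyXsubC_eq0 //.
by apply: contraTneq qp => ->; rewrite horner0 ltxx.
Qed.

Lemma good_add2 p q : good p -> good q ->
  good (p + q) /\ (mup th (p + q) <= mup th p)%N /\ (mup th (p + q) <= mup th q)%N.
Proof.
wlog : p q / (mup th p <= mup th q)%N.
  move=> H gp gq; case: (leqP (mup th p) (mup th q)) => h; first exact: H.
  have [g [h1 h2]] := H q p (ltnW h) gq gp.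
  by rewrite addrC; split; last split.
move=> le [m1 [q1 [pE q1p]]] [m2 [q2 [qE q2p]]]; subst p q.
rewrite (good_mup (erefl _) q1p) (good_mup (erefl _) q2p) in le *.
have E : q1 * XT ^+ m1 + q2 * XT ^+ m2 = (q1 + q2 * XT ^+ (m2 - m1)) * XT ^+ m1.
  by rewrite mulrDl -mulrA -exprD (subnK le).
have pos : 0 < (q1 + q2 * XT ^+ (m2 - m1)).[th].
  rewrite hornerD hornerM horner_exp hornerXsubC subrr expr0n.
  case: (m2 - m1)%N => [|k] /=; rewrite ?mulr1 ?mulr0 ?addr0 //.
  by apply: addr_gt0.
rewrite E (good_mup (erefl _) pos); split; first by exists m1, (q1 + q2 * XT ^+ (m2 - m1)).
by rewrite leqnn le.
Qed.

Lemma good_add p q : good p -> good0 q ->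
  good (p + q) /\ (mup th (p + q) <= mup th p)%N.
Proof.
move=> gp [->|gq]; first by rewrite addr0.
by have [? [? ?]] := good_add2 gp gq.
Qed.

Lemma good0_add p q : good0 p -> good0 q -> good0 (p + q).
Proof.
move=> [->|gp] gq; first by rewrite add0r.
by right; have [] := good_add gp gq.
Qed.

Lemma good0_sum (I : finType) (P : pred I) (F : I -> {poly R}) :
  (forall i, P i -> good0 (F i)) -> good0 (\sum_(i | P i) F i).
Proof.
move=> H; apply: (big_ind good0) => //; first by left.
exact: good0_add.
Qed.

Lemma good_scale k p : 0 < k -> good p -> good (k *: p) /\ mup th (k *: p) = mup th p.
Proof.
move=> kp [m [q [-> qp]]].
have pos : 0 < (k *: q).[th] by rewrite hornerZ mulr_gt0.
have E : k *: (q * XT ^+ m) = (k *: q) * XT ^+ m by rewrite scalerAl.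
rewrite E (good_mup (erefl _) pos) (good_mup (erefl _) qp); split => //.
by exists m, (k *: q).
Qed.

Lemma good0_scale k p : 0 < k -> good0 p -> good0 (k *: p).
Proof.
move=> kp [->|gp]; first by left; rewrite scaler0.
by right; have [] := good_scale kp gp.
Qed.

Lemma good_sq p : p != 0 -> good (p * p) /\ mup th (p * p) = (2 * mup th p)%N.
Proof.
move=> p0; have [m [q]] := multiplicity_XsubC p th; rewrite p0 /= => nr pE.
have pos : 0 < (q * q).[th].
  by rewrite hornerM -expr2 exprn_even_gt0 //= orbC -/(root q th) nr.
have E : p * p = (q * q) * XT ^+ (m + m) by rewrite pE exprD; ring.
have mp : mup th p = m by rewrite pE mupMr ?mup_XsubCX ?eqxx.
rewrite E (good_mup (erefl _) pos) mp; split; last by rewrite mul2n addnn.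
by exists (m + m), (q * q).
Qed.


Lemma mup_dvd p : XT ^+ (mup th p) %| p.
Proof.
have [->|p0] := eqVneq p 0; first exact: dvdp0.
by rewrite -mup_geq.
Qed.

Lemma dvd_deriv n p : XT ^+ n.+1 %| p -> XT ^+ n %| p^`().
Proof.
case/dvdpP=> r ->; rewrite derivM deriv_exp derivXsubC mul1r.
apply: dvdp_add; first by rewrite exprS mulrA dvdp_mull.
by rewrite ?mul1r mulrnAr -mulr_natl; apply: dvdp_mull; apply: dvdp_mull.
Qed.

Lemma dvd_deriv1 p : XT ^+ (mup th p).-1 %| p^`().
Proof.
case E : (mup th p) => [|n] /=; first by rewrite expr0 dvd1p.
by apply: dvd_deriv; rewrite -E mup_dvd.
Qed.

Lemma key_ineq A B : B * A^`() - A * B^`() != 0 ->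
  ((mup th A + mup th B).-1 <= mup th (B * A^`() - A * B^`()))%N.
Proof.
move=> F0; rewrite mup_geq //.
apply: dvdp_sub.
  apply: dvdp_trans (dvdp_mul (mup_dvd B) (dvd_deriv1 A)).
  by rewrite -exprD dvdp_exp2l //; case: (mup th A) => [|k] /=; lia.
apply: dvdp_trans (dvdp_mul (mup_dvd A) (dvd_deriv1 B)).
by rewrite -exprD dvdp_exp2l //; case: (mup th B) => [|k] /=; lia.
Qed.

End Good.


Section DD.
Variables (R : realFieldType) (V : finType) (e : rel V).
Hypothesis e_sym : symmetric e.
Hypothesis e_irr : irreflexive e.
Variables (a : V -> R) (c : {set V} -> R).
Hypothesis c_pos : forall u y, e u y -> 0 < c [set u; y].

Local Notation P := (PP e a c).

Definition DD (S : {set V}) u v := P (S :\ u) * P (S :\ v) - P S * P (S :\ u :\ v).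

Lemma setD1C (A : {set V}) x y : A :\ x :\ y = A :\ y :\ x.
Proof. by apply/setP=> z; rewrite !inE; case: (z == x); case: (z == y). Qed.

Lemma sum_split_v (S : {set V}) u v (f : V -> {poly R}) : v \in S ->
  \sum_(y | (y \in S) && e u y) f y =
  (if e u v then f v else 0) + \sum_(y | (y \in S :\ v) && e u y) f y.
Proof.
move=> vS; rewrite (bigID (fun y => y == v)) /=; congr (_ + _).
  case: ifP => euv.
    by apply: big_pred1 => y /=; case: eqP => [->|]; rewrite ?vS ?euv ?andbF.
  by apply: big_pred0 => y /=; case: eqP => [->|]; rewrite ?euv ?andbF.
by apply: eq_bigl => y; rewrite !inE; case: (y == v); rewrite /= ?andbF ?andbT.
Qed.

Lemma DD_rec (S : {set V}) u v : u \in S -> v \in S -> u != v ->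
  DD S u v = (if e u v then c [set u; v] *: (P (S :\ u :\ v) * P (S :\ u :\ v)) else 0)
     + \sum_(y | (y \in S :\ v) && e u y) c [set u; y] *: DD (S :\ u) y v.
Proof.
move=> uS vS uv.
have uSv : u \in S :\ v by rewrite !inE uS andbT.
rewrite /DD (PP_rec e_sym e_irr _ _ uS) (PP_rec e_sym e_irr _ _ uSv) (sum_split_v u _ vS).
rewrite [S :\ v :\ u]setD1C.
under [X in _ = _ + X]eq_bigr => y _ do
  rewrite scalerBr scalerAl scalerAr [S :\ u :\ y :\ v]setD1C.
rewrite sumrB -mulr_suml -mulr_sumr.
set s1 := \sum_(i in S :\ v | e u i) c [set u; i] *: P (S :\ u :\ i).
set s2 := \sum_(i in S :\ v | e u i) c [set u; i] *: P (S :\ u :\ v :\ i).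
have -> : (if e u v then c [set u; v] *: (P (S :\ u :\ v) * P (S :\ u :\ v)) else 0)
  = (if e u v then c [set u; v] *: P (S :\ u :\ v) else 0) * P (S :\ u :\ v).
  by case: ifP => _; rewrite ?mul0r // scalerAl.
set t := (if _ then _ else _).
ring.
Qed.


Variable th : R.

Lemma DD_good0 (S : {set V}) u v : u \in S -> v \in S -> u != v -> good0 th (DD S u v).
Proof.
elim: {S}_.+1 {-2}S (ltnSn #|S|) u v => [//|n IH] S lt u v uS vS uv.
rewrite DD_rec //; apply: good0_add.
  case: ifP => euv; last by left.
  right; have [g _] := good_sq th (PP_neq0 e_sym e_irr a c (S :\ u :\ v)).
  by have [] := good_scale (c_pos euv) g.
apply: good0_sum => y /andP[ySv euy]; apply: good0_scale (c_pos euy) _.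
move: ySv; rewrite !inE => /andP[yv yS].
have yu : y != u by apply: contraTneq euy => ->; rewrite e_irr.
apply: IH; rewrite ?inE ?yu ?yS ?vS ?yv 1?eq_sym ?uv //.
by move: lt; rewrite (cardsD1 u S) uS.
Qed.

Lemma DD_sum_good0 (S : {set V}) u v (Q : pred V) : u \in S -> v \in S -> u != v ->
  (forall y, Q y -> (y \in S :\ v) && e u y) ->
  good0 th (\sum_(y | Q y) c [set u; y] *: DD (S :\ u) y v).
Proof.
move=> uS vS uv HQ; apply: good0_sum => y /HQ /andP[ySv euy].
apply: good0_scale (c_pos euy) _.
move: ySv; rewrite !inE => /andP[yv yS].
have yu : y != u by apply: contraTneq euy => ->; rewrite e_irr.
by apply: DD_good0; rewrite ?inE ?yu ?yS ?vS ?yv 1?eq_sym ?uv.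
Qed.

Lemma first_good0 (S : {set V}) u v :
  good0 th (if e u v then c [set u; v] *: (P (S :\ u :\ v) * P (S :\ u :\ v)) else 0).
Proof.
case: ifP => euv; last by left.
right; have [g _] := good_sq th (PP_neq0 e_sym e_irr a c (S :\ u :\ v)).
by have [] := good_scale (c_pos euv) g.
Qed.

Lemma DD_path (s : seq V) : forall (S : {set V}) x,
  path e x s -> uniq (x :: s) -> {subset x :: s <= S} -> (0 < size s)%N ->
  good th (DD S x (last x s)) /\
  (mup th (DD S x (last x s)) <= 2 * mup th (P (S :\: [set v in x :: s])))%N.
Proof.
elim: s => [//|y s' IH] S x /andP[exy pth] uq sub _.
have xS : x \in S by apply: sub; rewrite inE eqxx.
have yS : y \in S by apply: sub; rewrite !inE eqxx orbT.
have xy : x != y by apply: contraTneq exy => ->; rewrite e_irr.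
move: uq; rewrite /= => /andP[xN /andP[yN uq']].
case: s' IH pth sub yN uq' xN => [|z t] IH pth sub yN uq' xN /=.
  rewrite DD_rec // exy.
  have [g1 m1] := good_sq th (PP_neq0 e_sym e_irr a c (S :\ x :\ y)).
  have [g2 m2] := good_scale (c_pos exy) g1.
  have [g3 m3] := good_add g2 (DD_sum_good0 (Q := fun y' => (y' \in S :\ y) && e x y')
      xS yS xy (fun y' h => h)).
  split => //; apply: leq_trans m3 _; rewrite m2 m1 leq_mul2l /=.
  suff -> : S :\: [set v in [:: x; y]] = S :\ x :\ y by [].
  by apply/setP=> w; rewrite !inE; case: (w == x); case: (w == y); rewrite ?andbF.
set v := last z t.
have vin : v \in z :: t by apply: mem_last.
have xv : x != v.
  by apply: contraNneq xN => ->; rewrite in_cons; apply/orP; right; exact: vin.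
have yv : y != v by apply: contraNneq yN => ->.
have vS : v \in S by apply: sub; rewrite !in_cons; apply/orP; right; apply/orP; right; exact: vin.
rewrite DD_rec // (bigD1 y) /=; last by rewrite !inE yS yv andbT exy.
have sub' : {subset y :: z :: t <= S :\ x}.
  move=> w win; rewrite !inE sub ?andbT; last by rewrite inE win orbT.
  by apply: contraNneq xN => <-.
have [g1 m1] := IH (S :\ x) y pth (introT andP (conj yN uq')) sub' erefl.
have [g2 m2] := good_scale (c_pos exy) g1.
have [g3 m3] := good_add g2 (DD_sum_good0
   (Q := fun y' => ((y' \in S :\ v) && e x y') && (y' != y)) xS vS xv
   (fun y' h => proj1 (andP h))).
have [g4 m4] := good_add g3 (first_good0 S x v).
rewrite [_ + (_ + _)]addrC.
split => //; apply: leq_trans m4 _; apply: leq_trans m3 _; rewrite m2.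
apply: leq_trans m1 _.
suff -> : S :\ x :\: [set v in [:: y, z & t]] = S :\: [set v in [:: x, y, z & t]] by [].
apply/setP=> w; rewrite !inE.
by case: (w == x); rewrite ?andbF ?andbT.
Qed.


Lemma FF_eq (S : {set V}) u : u \in S ->
  P (S :\ u) * (P S)^`() - P S * (P (S :\ u))^`() =
  P (S :\ u) * P (S :\ u) + \sum_(v in S :\ u) DD S u v.
Proof.
move=> uS; rewrite !PP_deriv (big_setD1 u) //=.
rewrite /DD sumrB -!mulr_sumr.
set s1 := \sum_(i in S :\ u) P (S :\ i).
set s2 := \sum_(i in S :\ u) P (S :\ u :\ i).
ring.
Qed.

Lemma main_ineq x s : path e x s -> uniq (x :: s) -> (0 < size s)%N ->
  ((mup th (P setT)).-1 <= mup th (P (setT :\: [set v in x :: s])))%N.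
Proof.
move=> pth uq sp.
have v0x : last x s \in setT :\ x.
  rewrite !inE andbT; move: uq => /= /andP[xN _].
  case: s pth sp xN => [//|y t] _ _ xN /=.
  by apply: contraNneq xN => <-; apply: mem_last.
set v0 := last x s in v0x *.
have := FF_eq (S := setT) (in_setT x); rewrite (bigD1 v0) //=.
have rest : good0 th (\sum_(i in setT :\ x | i != v0) DD setT x i).
  apply: good0_sum => i; rewrite !inE andbT => /andP[ix _].
  by apply: DD_good0; rewrite ?in_setT // eq_sym.
have [gD mD] := DD_path pth uq (fun _ _ => in_setT _) sp.
have [g1 m1] := good_add gD rest.
have [gs ms] := good_sq th (PP_neq0 e_sym e_irr a c (setT :\ x)).
have [g2 [m2 m3]] := good_add2 gs g1.
move=> FE; rewrite -FE in g2 m2 m3.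
have := key_ineq th (good_neq0 g2); rewrite ms in m2.
move: m2 m3 m1 mD; rewrite -/v0.
set A := mup th (P setT); set B := mup th (P (setT :\ x)).
set C := mup th (P (setT :\: [set v in x :: s])).
set F := mup th (_ - _); set G := mup th (DD _ _ _ + _).
move=> m2 m3 m1 mD h; lia.
Qed.

End DD.


Section QQ.
Variables (R : comNzRingType) (V : finType) (e : rel V).
Hypothesis e_irr : irreflexive e.
Variables (a : V -> R) (c : {set V} -> R).

Definition QQ (S : {set V}) : {poly R} :=
  \sum_(T : {set V} | T \subset S)
     ((-1) ^+ #|S :\: T| * \prod_(y in S :\: T) a y) *:
     \sum_(M : {set {set V}} | matching e T M)
        ((-1) ^+ #|M| * \prod_(E in M) c E) *: 'X^(#|T| - 2 * #|M|).

Lemma prod_expand (A : {set V}) :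
  \prod_(y in A) ('X - (a y)%:P) =
  \sum_(U : {set V} | U \subset A) (\prod_(y in A :\: U) (- a y)) *: 'X^#|U|.
Proof.
rewrite big_mkcond /=.
rewrite (eq_bigr (fun y => (if y \in A then 'X else 0) + (if y \in A then (- a y)%:P else 1)));
  last by move=> y _; case: (y \in A); rewrite ?add0r // polyCN.
rewrite bigA_distr (bigID (fun U : {set V} => U \subset A)) /=.
rewrite [X in _ + X]big1 ?addr0; last first.
  move=> U /subsetPn[y yU yA]; rewrite (bigD1 y) //= yU (negbTE yA) mul0r //.
apply: eq_bigr => U sUA.
rewrite (bigID (fun y => y \in U)) /=.
rewrite (eq_bigr (fun _ => 'X)); last by move=> y yU; rewrite yU (subsetP sUA).
rewrite prodr_const -mul_polyC mulrC; congr (_ * _).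
rewrite (eq_bigr (fun y => if y \in A then (- a y)%:P else 1)); last first.
  by move=> y /negbTE ->.
rewrite -big_mkcondr /= (rmorph_prod (@polyC R)).
by apply: eq_bigl => y; rewrite !inE andbC.
Qed.


Lemma PP_QQ (S : {set V}) : PP e a c S = QQ S.
Proof.
rewrite /QQ.
under eq_bigr => T _ do rewrite scaler_sumr.
rewrite (exchange_big_dep (fun M => matching e S M)) /=; last first.
  move=> T M sTS; rewrite matchingE (matchingE e S) => /andP[-> cT] /=.
  exact: subset_trans cT sTS.
rewrite /PP; apply: eq_bigr => M mM.
have mM' := mM; rewrite matchingE in mM'; case/andP: mM' => mT cS.
rewrite prod_expand scaler_sumr.
rewrite [RHS](reindex_onto (fun U => cover M :|: U) (fun T => T :\: cover M)) /=;
  last by move=> T /andP[_]; rewrite matchingE => /andP[_ cT];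
  apply/setP=> z; rewrite !inE; case: (boolP (z \in cover M)) => //= /(subsetP cT) ->.
apply: eq_big => U.
  rewrite matchingE mT subsetUl andbT subUset cS /= setDUl setDv set0U subsetD.
  by rewrite andbT (sameP eqP setDidPl).
move=> sU; move: (sU); rewrite subsetD => /andP[_ dUC].
rewrite -setDDl cardsU.
have -> : cover M :&: U = set0 by apply: disjoint_setI0; rewrite disjoint_sym.
rewrite cards0 subn0 (cover_card e_irr mM) addKn prodrN !scalerA; congr (_ *: _).
by rewrite mulrC.
Qed.

End QQ.



Local Open Scope complex_scope.

Lemma mup_map (R : realType) (th : R) (p : {poly R}) : p != 0 ->
  mup (Complex th 0) (map_poly (real_complex R) p) = mup th p.
Proof.
move=> p0.
have pC0 : map_poly (real_complex R) p != 0 by rewrite map_poly_eq0.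
have H n : (n <= mup (Complex th 0%R) (map_poly (real_complex R) p))%N = (n <= mup th p)%N.
  rewrite !mup_geq // -(dvdp_map (real_complex R)) rmorphXn /= map_polyXsubC.
  by [].
by apply/eqP; rewrite eqn_leq H leqnn -H leqnn.
Qed.

Lemma norm_complex (R : realType) (z : R[i]) : `|z| = (Normc.normc z)%:C.
Proof. by []. Qed.

Lemma eta_QQ (R : realType) (V : finType) (e : rel V) (w : {set V} -> R[i]) (w1 : V -> R)
  (S : {set V}) :
  eta_w e w w1 S = map_poly (real_complex R) (QQ e w1 (fun E => Normc.normc (w E) ^+ 2) S).
Proof.
rewrite /eta_w /QQ rmorph_sum /=; apply: eq_bigr => T _.
rewrite map_polyZ rmorphM rmorphXn rmorphN1 rmorph_prod /=; congr (_ *: _).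
rewrite /mu_w rmorph_sum /=; apply: eq_bigr => M _.
rewrite map_polyZ map_polyXn rmorphM rmorphXn rmorphN1 rmorph_prod /=; congr (_ *: _).
rewrite normr_prod -prodrXl; congr (_ * _); apply: eq_bigr => E _.
by rewrite norm_complex rmorphXn.
Qed.

Lemma cw_pos (R : realType) (z : R[i]) : z != 0 -> 0 < Normc.normc z ^+ 2.
Proof.
move=> z0; apply: exprn_gt0; rewrite lt_def; apply/andP; split.
  by apply/eqP => /Normc.eq0_normc; apply/eqP.
by case: z {z0} => ? ?; apply: sqrtr_ge0.
Qed.

Theorem corollary4p6 (R : realType) (V : finType) (e : rel V)
  (w : {set V} -> R[i]) (w1 : V -> R) (theta : R) (x : V) (s : seq V) :
  simple_graph e ->
  (forall E, E \in edges e [set: V] -> w E != 0) ->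
  path e x s -> uniq (x :: s) -> (0 < size s)%N ->
  (mult e w w1 theta (~: [set v in x :: s]) >= (mult e w w1 theta [set: V]).-1)%N.
Proof.
move=> [e_sym e_irr] wnz pth uq sp.
set cw := fun E => Normc.normc (w E) ^+ 2.
have c_pos : forall u y, e u y -> 0 < cw [set u; y].
  move=> u y euy; apply: cw_pos; apply: wnz; apply/edgesP.
  by exists u, y; rewrite !in_setT.
rewrite /mult !eta_QQ -!(PP_QQ e_irr) !mup_map ?(PP_neq0 e_sym e_irr) //.
rewrite -setTD.
exact: (main_ineq e_sym e_irr w1 c_pos theta pth uq sp).
Qed.
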